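(* Let $\xi,\eta\in\mathbb{R}$ and, for $x>0$, set $$K(x)=\frac{\ln x-9 \ln(1+x)+8 \ln(2+x)}{24}-\frac{18+33 x+14 x^2}{48 (1+x)^2 (2+x)},$$ $$M(x)=\psi(x)-\frac{28 x^4+87 x^3+73 x^2+3 x-12}{6 x (x+1)^3 (x+2)}-\frac{43\ln (x+1)-37\ln(x+2)}{6}.$$ Then the double inequality $\xi K(x)<M(x)<\eta K(x)$ holds for all $x\in(0,\infty)$ if and only if $\xi\ge4$ and $\eta\le0$.
   Context: $\Gamma$ is Euler's gamma function and $\psi=\Gamma'/\Gamma$ is the digamma function; $\ln$ is the natural logarithm. *)

(* Defs.v *)
From Stdlib Require Import Reals Lra Arith Factorial ClassicalEpsilon.
Open Scope R_scope.

Fixpoint rising_prod (x : R) (n : nat) : R :=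
  match n with
  | O => x
  | S m => rising_prod x m * (x + INR (S m))
  end.

Definition gamma_seq (x : R) (n : nat) : R :=
  INR (fact n) * Rpower (INR n) x / rising_prod x n.

(* Euler's gamma function (for x > 0), defined as the Gauss limit. *)
Definition Gamma (x : R) : R :=
  epsilon (inhabits 0) (fun g => Un_cv (gamma_seq x) g).

Definition digamma (x : R) : R :=
  epsilon (inhabits 0) (fun l => derivable_pt_lim Gamma x l) / Gamma x.

Definition K (x : R) : R :=
  (ln x - 9 * ln (1 + x) + 8 * ln (2 + x)) / 24
  - (18 + 33 * x + 14 * x ^ 2) / (48 * (1 + x) ^ 2 * (2 + x)).

Definition M (x : R) : R :=
  digamma x
  - (28 * x ^ 4 + 87 * x ^ 3 + 73 * x ^ 2 + 3 * x - 12)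
      / (6 * x * (x + 1) ^ 3 * (x + 2))
  - (43 * ln (x + 1) - 37 * ln (x + 2)) / 6.

(* Main.v *)
Require Import Defs.
From Stdlib Require Import Reals Lra Lia Arith Factorial ClassicalEpsilon.
From Coquelicot Require Import Coquelicot.
Open Scope R_scope.

Lemma ln_le' a b : 0 < a -> a <= b -> ln a <= ln b.
Proof.
  intros Ha Hab. destruct (Req_dec a b) as [->|Hne]; [lra|].
  left. apply ln_increasing; lra.
Qed.

Lemma ln_div' a b : 0 < a -> 0 < b -> ln (a / b) = ln a - ln b.
Proof.
  intros Ha Hb. unfold Rdiv. rewrite ln_mult, ln_Rinv; try lra.
  apply Rinv_0_lt_compat; lra.
Qed.

Lemma ln_le_sub1 t : 0 < t -> ln t <= t - 1.
Proof.
  intros Ht. rewrite <- (ln_exp (t-1)). apply ln_le'; [exact Ht|].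
  generalize (exp_ineq1_le (t-1)); lra.
Qed.

Lemma ln_diff_bounds a b : 0 < a -> 0 < b ->
  (b - a) / b <= ln b - ln a <= (b - a) / a.
Proof.
  intros Ha Hb. split.
  - assert (H := ln_le_sub1 (a/b) (Rdiv_lt_0_compat _ _ Ha Hb)).
    rewrite ln_div' in H by lra.
    replace ((b-a)/b) with (- (a/b - 1)) by (field; lra). lra.
  - assert (H := ln_le_sub1 (b/a) (Rdiv_lt_0_compat _ _ Hb Ha)).
    rewrite ln_div' in H by lra.
    replace ((b-a)/a) with (b/a - 1) by (field; lra). lra.
Qed.

Lemma cv_const c : Un_cv (fun _ => c) c.
Proof. intros eps He. exists O. intros n _. unfold Rdist. rewrite Rminus_diag, Rabs_R0. lra. Qed.

Lemma cv_ext (u v : nat -> R) l : (forall n, u n = v n) -> Un_cv u l -> Un_cv v l.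
Proof. intros H Hu eps He. destruct (Hu eps He) as [N HN]. exists N. intros n Hn. rewrite <- H. auto. Qed.

Lemma cv_unshift (u : nat -> R) l : Un_cv (fun n => u (S n)) l -> Un_cv u l.
Proof.
  intros H eps He. destruct (H eps He) as [N HN]. exists (S N). intros n Hn.
  destruct n as [|n]; [lia|]. apply HN. lia.
Qed.

Lemma cv_shift (u : nat -> R) l : Un_cv u l -> Un_cv (fun n => u (S n)) l.
Proof.
  intros H eps He. destruct (H eps He) as [N HN]. exists N. intros n Hn. apply HN. lia.
Qed.

Lemma cv_squeeze (u v : nat -> R) : (forall n, Rabs (u n) <= v n) -> Un_cv v 0 -> Un_cv u 0.
Proof.
  intros H Hv eps He. destruct (Hv eps He) as [N HN]. exists N. intros n Hn.
  specialize (HN n Hn). specialize (H n). unfold Rdist in *. rewrite Rminus_0_r in *.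
  apply Rabs_def2 in HN. lra.
Qed.

Lemma cv_lin (u v : nat -> R) a b lu lv : Un_cv u lu -> Un_cv v lv ->
  Un_cv (fun n => a * u n + b * v n) (a * lu + b * lv).
Proof.
  intros Hu Hv. apply CV_plus; apply CV_mult; auto; apply cv_const.
Qed.

Lemma inv_cv x : 0 < x -> Un_cv (fun n => / (x + INR n)) 0.
Proof.
  intros Hx eps He. destruct (INR_unbounded (/ eps)) as [N HN]. exists N.
  intros n Hn. unfold Rdist. rewrite Rminus_0_r.
  assert (Hn' : INR N <= INR n) by (apply le_INR; lia).
  assert (0 < / eps) by (apply Rinv_0_lt_compat; lra).
  rewrite Rabs_right.
  2:{ left. apply Rinv_0_lt_compat. generalize (pos_INR n); lra. }
  apply (Rmult_lt_reg_l (x + INR n)). generalize (pos_INR n); lra.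
  rewrite Rinv_r by (generalize (pos_INR n); lra).
  apply (Rmult_lt_reg_l (/ eps)); auto.
  replace (/ eps * ((x + INR n) * eps)) with (x + INR n) by (field; lra).
  rewrite Rmult_1_r. lra.
Qed.

Lemma neg_of_steps (h : R -> R) Y :
  (forall y, Y <= y -> h y < h (y + 1)) ->
  Un_cv (fun n => h (Y + INR n)) 0 -> h Y < 0.
Proof.
  intros Hs Hc.
  assert (Hi : forall n, h (Y + 1) <= h (Y + INR (S n))).
  { induction n.
    - simpl. right. reflexivity.
    - apply Rle_trans with (1 := IHn). left.
      replace (Y + INR (S (S n))) with (Y + INR (S n) + 1) by (rewrite (S_INR (S n)); ring).
      apply Hs. generalize (pos_INR (S n)); lra. }
  assert (H1 : h (Y+1) <= 0).
  { apply (@Rle_cv_lim (fun _ => h (Y+1)) (fun n => h (Y + INR (S n)))); auto.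
    apply cv_const. apply (cv_shift (fun n => h (Y + INR n))). exact Hc. }
  specialize (Hs Y (Rle_refl _)). lra.
Qed.

Lemma incr_of_deriv (h h' : R -> R) Y :
  (forall y, Y <= y -> derivable_pt_lim h y (h' y)) ->
  (forall y, Y <= y -> 0 < h' y) ->
  forall y, Y <= y -> h y < h (y + 1).
Proof.
  intros Hd Hp y Hy.
  destruct (MVT_cor2 h h' y (y+1)) as [c [Hc1 Hc2]]; [lra| |].
  - intros c Hc. apply Hd. lra.
  - assert (0 < h' c) by (apply Hp; lra). nra.
Qed.
Definition Lsum (y : R) (n : nat) := sum_f_R0 (fun k => ln (y + INR k)) n.
Definition Dsum (y : R) (n : nat) := sum_f_R0 (fun k => / (y + INR k)) n.
Definition Ln (n : nat) (y : R) := ln (INR (fact (S n))) + y * ln (INR (S n)) - Lsum y (S n).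
Definition Dn (n : nat) (y : R) := ln (INR (S n)) - Dsum y (S n).

Lemma INR_S_pos n : 0 < INR (S n).
Proof. rewrite S_INR. generalize (pos_INR n); lra. Qed.

Lemma rising_ln y n : 0 < y -> 0 < rising_prod y n /\ ln (rising_prod y n) = Lsum y n.
Proof.
  intros Hy. induction n as [|n IH].
  - simpl. unfold Lsum. simpl. rewrite Rplus_0_r. split; auto.
  - destruct IH as [IH1 IH2]. simpl rising_prod.
    assert (0 < y + INR (S n)) by (generalize (INR_S_pos n); lra).
    split. apply Rmult_lt_0_compat; auto.
    rewrite ln_mult by auto. rewrite IH2. unfold Lsum. simpl sum_f_R0. reflexivity.
Qed.

Lemma gamma_seq_exp y n : 0 < y -> gamma_seq y (S n) = exp (Ln n y).
Proof.
  intros Hy. destruct (rising_ln y (S n) Hy) as [Hp Hl].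
  unfold gamma_seq, Ln, Rpower. rewrite <- Hl.
  unfold Rminus. rewrite !exp_plus, exp_Ropp, !exp_ln; auto.
  apply INR_fact_lt_0.
Qed.

Lemma Ln_step n y : 0 < y ->
  Ln (S n) y - Ln n y =
  ln (INR (S n) + 1) - ln (y + INR (S n) + 1) + y * (ln (INR (S n) + 1) - ln (INR (S n))).
Proof.
  intros Hy. unfold Ln, Lsum.
  change (sum_f_R0 (fun k => ln (y + INR k)) (S (S n))) with
    (sum_f_R0 (fun k => ln (y + INR k)) (S n) + ln (y + INR (S (S n)))).
  change (fact (S (S n))) with (S (S n) * fact (S n))%nat.
  rewrite mult_INR, ln_mult; [| apply INR_S_pos | apply INR_fact_lt_0].
  rewrite (S_INR (S n)). replace (y + (INR (S n) + 1)) with (y + INR (S n) + 1) by ring.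
  ring.
Qed.

Lemma Ln_growing y : 0 < y -> Un_growing (fun n => Ln n y).
Proof.
  intros Hy n. simpl. generalize (Ln_step n y Hy). set (m := INR (S n)).
  assert (Hm : 0 < m) by apply INR_S_pos.
  destruct (ln_diff_bounds m (m+1)) as [A1 A2]; try lra.
  destruct (ln_diff_bounds (m+1) (y+m+1)) as [B1 B2]; try lra.
  intros E.
  assert (Hx : y * ((m + 1 - m) / (m + 1)) <= y * (ln (m + 1) - ln m)) by (apply Rmult_le_compat_l; lra).
  assert (Hz : (y + m + 1 - (m + 1)) / (m + 1) = y * ((m + 1 - m) / (m + 1))) by (field; lra).
  lra.
Qed.

Lemma Ln_bound y n : 0 < y -> Ln n y + y * (1 + y) / INR (S n) <= Ln 0 y + y * (1 + y).
Proof.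
  intros Hy. induction n as [|n IH].
  - simpl. replace (1 + y) with (1+y) by ring. rewrite Rdiv_1_r. lra.
  - generalize (Ln_step n y Hy). rewrite (S_INR (S n)). set (m := INR (S n)) in *.
    assert (Hm : 0 < m) by apply INR_S_pos.
    destruct (ln_diff_bounds m (m+1)) as [A1 A2]; try lra.
    destruct (ln_diff_bounds (m+1) (y+m+1)) as [B1 B2]; try lra.
    intros E.
    assert (Hx : y * (ln (m + 1) - ln m) <= y * ((m + 1 - m) / m)) by (apply Rmult_le_compat_l; lra).
    assert (Hk : y * ((m + 1 - m) / m) - (y + m + 1 - (m + 1)) / (y + m + 1)
                 <= y * (1 + y) / m - y * (1 + y) / (m + 1)).
    { replace (y * ((m + 1 - m) / m) - (y + m + 1 - (m + 1)) / (y + m + 1)) with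
        (y * (1 + y) / (m * (y + m + 1))) by (field; lra).
      replace (y * (1 + y) / m - y * (1 + y) / (m + 1)) with (y * (1+y) / (m * (m+1))) by (field; lra).
      apply Rmult_le_compat_l. nra.
      apply Rinv_le_contravar; nra. }
    lra.
Qed.

Definition Lfun (y : R) : R := epsilon (inhabits 0) (fun l => Un_cv (fun n => Ln n y) l).

Lemma Lfun_cv y : 0 < y -> Un_cv (fun n => Ln n y) (Lfun y).
Proof.
  intros Hy. unfold Lfun. apply epsilon_spec.
  destruct (growing_cv (fun n => Ln n y) (Ln_growing y Hy)) as [l Hl].
  - exists (Ln 0 y + y * (1 + y)). intros z [i ->].
    generalize (Ln_bound y i Hy). assert (0 < y * (1 + y) / INR (S i)).
    { apply Rdiv_lt_0_compat. nra. apply INR_S_pos. }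
    lra.
  - exists l; exact Hl.
Qed.

Lemma Gamma_eq y : 0 < y -> Gamma y = exp (Lfun y).
Proof.
  intros Hy.
  assert (Hc : Un_cv (gamma_seq y) (exp (Lfun y))).
  { apply cv_unshift. apply (cv_ext (fun n => exp (Ln n y))).
    intros n; symmetry; apply gamma_seq_exp; auto.
    apply (continuity_seq exp (fun n => Ln n y)).
    apply derivable_continuous_pt. apply derivable_exp.
    apply Lfun_cv; auto. }
  unfold Gamma. apply (UL_sequence (gamma_seq y)); auto.
  apply epsilon_spec. exists (exp (Lfun y)); auto.
Qed.
Lemma ln_shift_derive c y : 0 < y + c -> is_derive (fun z => ln (z + c)) y (/ (y + c)).
Proof. intros H. auto_derive. lra. field. lra. Qed.

Lemma Lsum_derive m y : 0 < y -> is_derive (fun z => Lsum z m) y (Dsum y m).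
Proof.
  intros Hy. induction m as [|m IH].
  - unfold Lsum, Dsum. simpl. auto_derive. lra. field. lra.
  - apply is_derive_ext with (f := fun z => Lsum z m + ln (z + INR (S m))).
    { intros t. reflexivity. }
    change (Dsum y (S m)) with (Dsum y m + / (y + INR (S m))).
    apply (is_derive_plus (fun z => Lsum z m) (fun z => ln (z + INR (S m)))); auto.
    generalize (INR_S_pos m); intros Hm.
    apply ln_shift_derive. lra.
Qed.

Lemma aff_derive a b y : is_derive (fun z => a + z * b) y b.
Proof. auto_derive. exact I. ring. Qed.

Lemma Ln_derive n y : 0 < y -> derivable_pt_lim (Ln n) y (Dn n y).
Proof.
  intros Hy. apply is_derive_Reals. unfold Ln, Dn.
  apply is_derive_ext with
    (f := fun z => ln (INR (fact (S n))) + z * ln (INR (S n)) - Lsum z (S n)).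
  { intros; reflexivity. }
  generalize (Lsum_derive (S n) y Hy). intros H.
  apply (is_derive_minus (fun z => ln (INR (fact (S n))) + z * ln (INR (S n))) (fun z => Lsum z (S n))); auto.
  apply aff_derive.
Qed.

Lemma Dn_step n y : 0 < y ->
  Dn (S n) y - Dn n y = ln (INR (S n) + 1) - ln (INR (S n)) - / (y + INR (S n) + 1).
Proof.
  intros Hy. unfold Dn, Dsum.
  change (sum_f_R0 (fun k => / (y + INR k)) (S (S n))) with
    (sum_f_R0 (fun k => / (y + INR k)) (S n) + / (y + INR (S (S n)))).
  rewrite (S_INR (S n)). replace (y + (INR (S n) + 1)) with (y + INR (S n) + 1) by ring. ring.
Qed.

Lemma Dn_growing y : 0 < y -> Un_growing (fun n => Dn n y).
Proof.
  intros Hy n. simpl. generalize (Dn_step n y Hy). set (m := INR (S n)).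
  assert (Hm : 0 < m) by apply INR_S_pos.
  destruct (ln_diff_bounds m (m+1)) as [A1 A2]; try lra.
  intros E.
  assert (/ (y + m + 1) <= (m + 1 - m) / (m + 1)).
  { replace ((m + 1 - m) / (m + 1)) with (/ (m+1)) by (field; lra).
    apply Rinv_le_contravar; lra. }
  lra.
Qed.

Lemma Dsum_lower y k : 0 < y -> ln (y + INR k + 1) - ln y <= Dsum y k.
Proof.
  intros Hy. induction k as [|k IH].
  - unfold Dsum. simpl. destruct (ln_diff_bounds y (y + 0 + 1)) as [_ B]; try lra.
    replace ((y + 0 + 1 - y) / y) with (/ (y + 0)) in B by (field; lra). lra.
  - unfold Dsum in *. rewrite tech5, S_INR.
    assert (H0 := pos_INR k).
    destruct (ln_diff_bounds (y + INR k + 1) (y + (INR k + 1) + 1)) as [_ B]; try lra.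
    replace ((y + (INR k + 1) + 1 - (y + INR k + 1)) / (y + INR k + 1)) with (/ (y + (INR k + 1))) in B
      by (field; lra). lra.
Qed.

Lemma Dsum_upper y k : 0 < y -> Dsum y k <= / y + ln (y + INR k) - ln y.
Proof.
  intros Hy. induction k as [|k IH].
  - unfold Dsum. simpl. rewrite Rplus_0_r. lra.
  - unfold Dsum in *. rewrite tech5, S_INR.
    assert (H0 := pos_INR k).
    destruct (ln_diff_bounds (y + INR k) (y + (INR k + 1))) as [B _]; try lra.
Qed.

Lemma Dn_upper n y : 0 < y -> Dn n y <= ln y.
Proof.
  intros Hy. unfold Dn. generalize (Dsum_lower y (S n) Hy). intros H.
  assert (ln (INR (S n)) <= ln (y + INR (S n) + 1)).
  { apply ln_le'. apply INR_S_pos. lra. }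
  lra.
Qed.

Lemma Dn_lower n y : 0 < y -> ln y - / y - y / INR (S n) <= Dn n y.
Proof.
  intros Hy. unfold Dn. generalize (Dsum_upper y (S n) Hy). intros H.
  generalize (INR_S_pos n). intros Hm.
  destruct (ln_diff_bounds (INR (S n)) (y + INR (S n))) as [_ B]; lra.
Qed.

Definition Psi (y : R) : R := epsilon (inhabits 0) (fun l => Un_cv (fun n => Dn n y) l).

Lemma Psi_cv y : 0 < y -> Un_cv (fun n => Dn n y) (Psi y).
Proof.
  intros Hy. unfold Psi. apply epsilon_spec.
  destruct (growing_cv (fun n => Dn n y) (Dn_growing y Hy)) as [l Hl].
  - exists (ln y). intros z [i ->]. apply Dn_upper; auto.
  - exists l; exact Hl.
Qed.

Lemma invS_cv : Un_cv (fun n => / INR (S n)) 0.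
Proof.
  apply (cv_ext (fun n => / (1 + INR n))). intros n. rewrite S_INR. f_equal. ring.
  apply inv_cv. lra.
Qed.

Lemma Psi_bounds y : 0 < y -> ln y - / y <= Psi y <= ln y.
Proof.
  intros Hy. split.
  - apply (@Rle_cv_lim (fun n => ln y - / y - y / INR (S n)) (fun n => Dn n y)).
    intros n; apply Dn_lower; auto.
    replace (ln y - / y) with (1 * (ln y - / y) + (- y) * 0) by ring.
    apply (cv_ext (fun n => 1 * (ln y - / y) + (- y) * / INR (S n))).
    intros n; unfold Rdiv; ring.
    apply cv_lin. apply cv_const. apply invS_cv.
    apply Psi_cv; auto.
  - apply (@Rle_cv_lim (fun n => Dn n y) (fun n => ln y)).
    intros n; apply Dn_upper; auto. apply Psi_cv; auto. apply cv_const.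
Qed.

Lemma Dn_unif y b n : 0 < y -> y <= b -> forall m, Dn m y <= Dn n y + (1 + b) / INR (S n).
Proof.
  intros Hy Hb.
  assert (Hk : forall k, Dn (n + k) y + (1 + b) / INR (S (n + k)) <= Dn n y + (1 + b) / INR (S n)).
  { induction k as [|k IH].
    - rewrite Nat.add_0_r. lra.
    - replace (n + S k)%nat with (S (n + k)) by lia.
      generalize (Dn_step (n+k) y Hy). rewrite (S_INR (S (n+k))). set (m := INR (S (n + k))) in *.
      assert (Hm : 0 < m) by apply INR_S_pos.
      destruct (ln_diff_bounds m (m+1)) as [A1 A2]; try lra.
      intros E.
      assert (Hq : (m + 1 - m) / m - / (y + m + 1) <= (1 + b) / m - (1 + b) / (m + 1)).
      { replace ((m + 1 - m) / m - / (y + m + 1)) with ((1 + y) / (m * (y + m + 1))) by (field; lra).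
        replace ((1 + b) / m - (1 + b) / (m + 1)) with ((1 + b) / (m * (m + 1))) by (field; lra).
        unfold Rdiv. apply Rmult_le_compat; try lra.
        left; apply Rinv_0_lt_compat; nra.
        apply Rinv_le_contravar; nra. }
      lra. }
  intros m. destruct (le_lt_dec m n) as [Hmn|Hmn].
  - assert (Dn m y <= Dn n y) by (apply (tech9 (fun k => Dn k y)); auto; apply Dn_growing; auto).
    assert (0 < (1 + b) / INR (S n)) by (apply Rdiv_lt_0_compat; [lra | apply INR_S_pos]).
    lra.
  - specialize (Hk (m - n)%nat). replace (n + (m - n))%nat with m in Hk by lia.
    assert (0 < (1 + b) / INR (S m)) by (apply Rdiv_lt_0_compat; [lra | apply INR_S_pos]).
    lra.
Qed.

Lemma Psi_unif y b n : 0 < y -> y <= b -> 0 <= Psi y - Dn n y <= (1 + b) / INR (S n).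
Proof.
  intros Hy Hb. split.
  - generalize (growing_ineq _ _ (Dn_growing y Hy) (Psi_cv y Hy) n). lra.
  - assert (Psi y <= Dn n y + (1 + b) / INR (S n)).
    { apply (@Rle_cv_lim (fun m => Dn m y) (fun _ => Dn n y + (1 + b) / INR (S n))).
      intros m; apply Dn_unif; auto. apply Psi_cv; auto. apply cv_const. }
    lra.
Qed.

Lemma Lfun_derive x : 0 < x -> derivable_pt_lim Lfun x (Psi x).
Proof.
  intros Hx.
  assert (Hr : 0 < x / 2) by lra.
  set (r := mkposreal (x/2) Hr).
  assert (HB : forall y, Boule x r y -> x / 2 < y < 3 * x / 2).
  { intros y Hy. unfold Boule in Hy. simpl in Hy. apply Rabs_def2 in Hy. lra. }
  apply (CVU_derivable Ln Dn Lfun Psi x r).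
  - intros eps He. destruct (INR_unbounded ((1 + 3 * x / 2) / eps)) as [N HN].
    exists N. intros n y Hn Hy. destruct (HB y Hy) as [Hy1 Hy2].
    destruct (Psi_unif y (3 * x / 2) n) as [U1 U2]; try lra.
    rewrite Rabs_right by lra.
    assert ((1 + 3 * x / 2) / INR (S n) < eps).
    { assert (INR N <= INR n) by (apply le_INR; lia).
      rewrite S_INR. apply (Rmult_lt_reg_r (INR n + 1)). generalize (pos_INR n); lra.
      unfold Rdiv. rewrite Rmult_assoc, Rinv_l by (generalize (pos_INR n); lra).
      apply (Rmult_lt_reg_l (/ eps)). apply Rinv_0_lt_compat; lra.
      replace (/ eps * (eps * (INR n + 1))) with (INR n + 1) by (field; lra).
      unfold Rdiv in HN. lra. }
    lra.
  - intros y Hy. apply Lfun_cv. destruct (HB y Hy); lra.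
  - intros n y Hy. apply Ln_derive. destruct (HB y Hy); lra.
  - unfold Boule. simpl. rewrite Rminus_diag, Rabs_R0. lra.
Qed.

Lemma dpl_local (f g : R -> R) x l d : 0 < d ->
  (forall z, Rabs (z - x) < d -> f z = g z) -> derivable_pt_lim g x l -> derivable_pt_lim f x l.
Proof.
  intros Hd Heq Hg eps He. destruct (Hg eps He) as [del Hdel].
  assert (Hm : 0 < Rmin del d) by (apply Rmin_pos; [apply cond_pos | lra]).
  exists (mkposreal _ Hm). intros h Hh Hhl. simpl in Hhl.
  rewrite !Heq.
  - apply Hdel; auto. apply Rlt_le_trans with (1 := Hhl). apply Rmin_l.
  - rewrite Rminus_diag, Rabs_R0. lra.
  - replace (x + h - x) with h by ring. apply Rlt_le_trans with (1 := Hhl). apply Rmin_r.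
Qed.

Lemma Gamma_derive x : 0 < x -> derivable_pt_lim Gamma x (exp (Lfun x) * Psi x).
Proof.
  intros Hx. apply (dpl_local Gamma (comp exp Lfun) x _ x Hx).
  - intros z Hz. apply Rabs_def2 in Hz. unfold comp. apply Gamma_eq. lra.
  - apply derivable_pt_lim_comp. apply Lfun_derive; auto. apply derivable_pt_lim_exp.
Qed.

Lemma digamma_eq x : 0 < x -> digamma x = Psi x.
Proof.
  intros Hx. unfold digamma.
  assert (H : derivable_pt_lim Gamma x
     (epsilon (inhabits 0) (fun l => derivable_pt_lim Gamma x l))).
  { apply epsilon_spec. exists (exp (Lfun x) * Psi x). apply Gamma_derive; auto. }
  rewrite (uniqueness_limite _ _ _ _ H (Gamma_derive x Hx)).
  rewrite Gamma_eq by auto. field. apply Rgt_not_eq, exp_pos.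
Qed.

Lemma Dsum_shift x k : Dsum x (S k) = / x + Dsum (x + 1) k.
Proof.
  induction k as [|k IH].
  - unfold Dsum. simpl. rewrite !Rplus_0_r. reflexivity.
  - unfold Dsum in *. change (sum_f_R0 (fun k0 => / (x + INR k0)) (S (S k))) with
      (sum_f_R0 (fun k0 => / (x + INR k0)) (S k) + / (x + INR (S (S k)))).
    rewrite IH. rewrite (tech5 (fun k0 => / (x + 1 + INR k0)) k).
    replace (x + INR (S (S k))) with (x + 1 + INR (S k)) by (rewrite (S_INR (S k)); ring). ring.
Qed.

Lemma Psi_shift x : 0 < x -> Psi (x + 1) = Psi x + / x.
Proof.
  intros Hx. apply (UL_sequence (fun n => Dn n (x + 1))). apply Psi_cv; lra.
  apply (cv_ext (fun n => 1 * Dn n x + 1 * (/ x - / (x + INR (S (S n)))))).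
  { intros n. unfold Dn. assert (E := Dsum_shift x (S n)).
    change (Dsum x (S (S n))) with (Dsum x (S n) + / (x + INR (S (S n)))) in E. lra. }
  replace (Psi x + / x) with (1 * Psi x + 1 * (/ x - 0)) by ring.
  apply cv_lin. apply Psi_cv; auto.
  apply CV_minus. apply cv_const.
  apply (cv_shift (fun n => / (x + INR (S n)))). apply (cv_shift (fun n => / (x + INR n))).
  apply inv_cv; auto.
Qed.

Ltac ppos := repeat (first [ apply Rmult_lt_0_compat | apply pow_lt | apply Rdiv_lt_0_compat
                            | apply Rinv_0_lt_compat]); try lra.
Ltac side := repeat split; try lra; try (apply Rgt_not_eq; ppos).

Definition RK (y : R) := (18 + 33 * y + 14 * y ^ 2) / (48 * (1 + y) ^ 2 * (2 + y)).
Definition RM (y : R) := (28 * y ^ 4 + 87 * y ^ 3 + 73 * y ^ 2 + 3 * y - 12) / (6 * y * (y + 1) ^ 3 * (y + 2)).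
Definition dK (y : R) := (ln y - 10 * ln (1 + y) + 17 * ln (2 + y) - 8 * ln (3 + y)) / 24 - RK y + RK (y + 1).
Definition dM (y : R) := - / y - RM y + RM (y + 1) - (43 * ln (y + 1) - 80 * ln (y + 2) + 37 * ln (y + 3)) / 6.

Lemma K_step y : K y - K (y + 1) = dK y.
Proof.
  unfold K, dK, RK. replace (ln (y + 1)) with (ln (1 + y)) by (f_equal; ring).
  replace (1 + (y + 1)) with (2 + y) by ring. replace (2 + (y + 1)) with (3 + y) by ring. unfold Rdiv. ring.
Qed.

Lemma M_step y : 0 < y -> M y - M (y + 1) = dM y.
Proof.
  intros Hy. unfold M, dM, RM. rewrite (digamma_eq (y + 1)), (digamma_eq y), Psi_shift by lra.
  replace (y + 1 + 1) with (y + 2) by ring. replace (y + 1 + 2) with (y + 3) by ring. unfold Rdiv. ring.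
Qed.

Definition dKd (y : R) := (72 + 211 * y + 238 * y ^ 2 + 115 * y ^ 3 + 20 * y ^ 4) / (24 * y * (y + 1) ^ 3 * (y + 2) ^ 3 * (y + 3) ^ 2).
Definition dMd (y : R) := (77 + 254 * y + 419 * y ^ 2 + 344 * y ^ 3 + 134 * y ^ 4 + 20 * y ^ 5) / (6 * (y + 1) ^ 4 * (y + 2) ^ 4 * (y + 3) ^ 2).

Lemma dK_der y : 0 < y -> derivable_pt_lim dK y (dKd y).
Proof.
  intros Hy. apply is_derive_Reals. unfold dK, RK, dKd. auto_derive.
  - side.
  - field. side.
Qed.

Lemma dM_der y : 0 < y -> derivable_pt_lim dM y (dMd y).
Proof.
  intros Hy. apply is_derive_Reals. unfold dM, RM, dMd. auto_derive.
  - side.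
  - field. side.
Qed.

Ltac powpos y := assert (0 < y ^ 2) by ppos; assert (0 < y ^ 3) by ppos; assert (0 < y ^ 4) by ppos;
  assert (0 < y ^ 5) by ppos; assert (0 < y ^ 6) by ppos.

Lemma dKd_pos y : 0 < y -> 0 < dKd y.
Proof. intros Hy. unfold dKd. powpos y. apply Rdiv_lt_0_compat; [lra | ppos]. Qed.

Lemma dMd_pos y : 0 < y -> 0 < dMd y.
Proof. intros Hy. unfold dMd. powpos y. apply Rdiv_lt_0_compat; [lra | ppos]. Qed.

Lemma dG_pos y : 0 < y -> 0 < 4 * dKd y - dMd y.
Proof.
  intros Hy. powpos y.
  replace (4 * dKd y - dMd y) with
    ((144 + 561 * y + 927 * y ^ 2 + 736 * y ^ 3 + 279 * y ^ 4 + 41 * y ^ 5) /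
     (6 * y * (y + 1) ^ 4 * (y + 2) ^ 4 * (y + 3) ^ 2)).
  apply Rdiv_lt_0_compat; [lra | ppos].
  unfold dKd, dMd. field. side.
Qed.

Lemma dG_bound y : 0 < y -> y * (4 * dKd y - dMd y) <= 12 * dKd y.
Proof.
  intros Hy. powpos y.
  assert (Hq : 0 <= (432 + 1770 * y + 2982 * y ^ 2 + 2538 * y ^ 3 + 1133 * y ^ 4 + 246 * y ^ 5 + 19 * y ^ 6) /
     (6 * y * (y + 1) ^ 4 * (y + 2) ^ 4 * (y + 3) ^ 2)).
  { left. apply Rdiv_lt_0_compat; [lra | ppos]. }
  replace ((432 + 1770 * y + 2982 * y ^ 2 + 2538 * y ^ 3 + 1133 * y ^ 4 + 246 * y ^ 5 + 19 * y ^ 6) /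
     (6 * y * (y + 1) ^ 4 * (y + 2) ^ 4 * (y + 3) ^ 2)) with (12 * dKd y - y * (4 * dKd y - dMd y)) in Hq.
  lra.
  unfold dKd, dMd. field. side.
Qed.

Lemma ln_split a y : 0 < y -> 0 <= a -> ln (y + a) = ln y + ln (1 + a * / y).
Proof.
  intros Hy Ha. rewrite <- ln_mult; [| lra |].
  - f_equal. field. lra.
  - assert (0 <= a * / y) by (apply Rmult_le_pos; [lra | left; apply Rinv_0_lt_compat; lra]). lra.
Qed.

Definition gK (t : R) := (-9 * ln (1 + 1 * t) + 8 * ln (1 + 2 * t)) / 24
  - t * (18 * t ^ 2 + 33 * t + 14) / (48 * (1 + t) ^ 2 * (1 + 2 * t)).
Definition gM (t : R) := (-43 * ln (1 + 1 * t) + 37 * ln (1 + 2 * t)) / 6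
  - t * (28 + 87 * t + 73 * t ^ 2 + 3 * t ^ 3 - 12 * t ^ 4) / (6 * (1 + t) ^ 3 * (1 + 2 * t)).
Definition gdK (t : R) := (-10 * ln (1 + 1 * t) + 17 * ln (1 + 2 * t) - 8 * ln (1 + 3 * t)) / 24
  - t * (18 * t ^ 2 + 33 * t + 14) / (48 * (1 + t) ^ 2 * (1 + 2 * t))
  + t * (65 * t ^ 2 + 61 * t + 14) / (48 * (1 + 2 * t) ^ 2 * (1 + 3 * t)).
Definition gdM (t : R) := - t
  - t * (28 + 87 * t + 73 * t ^ 2 + 3 * t ^ 3 - 12 * t ^ 4) / (6 * (1 + t) ^ 3 * (1 + 2 * t))
  + t * (28 + 199 * t + 502 * t ^ 2 + 522 * t ^ 3 + 179 * t ^ 4) / (6 * (1 + t) * (1 + 2 * t) ^ 3 * (1 + 3 * t))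
  - (43 * ln (1 + 1 * t) - 80 * ln (1 + 2 * t) + 37 * ln (1 + 3 * t)) / 6.

Lemma K_eq y : 0 < y -> K y = gK (/ y).
Proof.
  intros Hy. unfold K, gK. rewrite (Rplus_comm 1 y), (Rplus_comm 2 y).
  rewrite (ln_split 1 y), (ln_split 2 y) by lra.
  assert (0 < / y) by (apply Rinv_0_lt_compat; lra).
  field. side.
Qed.

Lemma M_eq y : 0 < y -> M y = (Psi y - ln y) + gM (/ y).
Proof.
  intros Hy. unfold M, gM. rewrite digamma_eq by auto.
  rewrite (ln_split 1 y), (ln_split 2 y) by lra.
  assert (0 < / y) by (apply Rinv_0_lt_compat; lra).
  field. side.
Qed.

Lemma dK_eq y : 0 < y -> dK y = gdK (/ y).
Proof.
  intros Hy. unfold dK, RK, gdK. rewrite (Rplus_comm 1 y), (Rplus_comm 2 y), (Rplus_comm 3 y).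
  rewrite (ln_split 1 y), (ln_split 2 y), (ln_split 3 y) by lra.
  assert (0 < / y) by (apply Rinv_0_lt_compat; lra).
  field. side.
Qed.

Lemma dM_eq y : 0 < y -> dM y = gdM (/ y).
Proof.
  intros Hy. unfold dM, RM, gdM.
  rewrite (ln_split 1 y), (ln_split 2 y), (ln_split 3 y) by lra.
  assert (0 < / y) by (apply Rinv_0_lt_compat; lra).
  field. side.
Qed.

Lemma cont_of_ex_derive (g : R -> R) : ex_derive g 0 -> continuity_pt g 0.
Proof.
  intros H. apply derivable_continuous_pt. exists (Derive g 0).
  apply is_derive_Reals. apply Derive_correct. exact H.
Qed.

Lemma lim_g (g : R -> R) x : 0 < x -> continuity_pt g 0 -> g 0 = 0 ->
  Un_cv (fun n => g (/ (x + INR n))) 0.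
Proof.
  intros Hx Hc H0. rewrite <- H0. apply (continuity_seq g (fun n => / (x + INR n))); auto.
  apply inv_cv; auto.
Qed.

Lemma xn_pos x n : 0 < x -> 0 < x + INR n.
Proof. intros; generalize (pos_INR n); lra. Qed.

Lemma K_lim x : 0 < x -> Un_cv (fun n => K (x + INR n)) 0.
Proof.
  intros Hx. apply (cv_ext (fun n => gK (/ (x + INR n)))).
  { intros n. symmetry. apply K_eq, xn_pos; auto. }
  apply lim_g; auto.
  - apply cont_of_ex_derive. unfold gK. auto_derive. side.
  - unfold gK. rewrite !Rmult_0_r, !Rplus_0_r, ln_1. unfold Rdiv. ring.
Qed.

Lemma dK_lim x : 0 < x -> Un_cv (fun n => dK (x + INR n)) 0.
Proof.
  intros Hx. apply (cv_ext (fun n => gdK (/ (x + INR n)))).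
  { intros n. symmetry. apply dK_eq, xn_pos; auto. }
  apply lim_g; auto.
  - apply cont_of_ex_derive. unfold gdK. auto_derive. side.
  - unfold gdK. rewrite !Rmult_0_r, !Rplus_0_r, ln_1. unfold Rdiv. ring.
Qed.

Lemma dM_lim x : 0 < x -> Un_cv (fun n => dM (x + INR n)) 0.
Proof.
  intros Hx. apply (cv_ext (fun n => gdM (/ (x + INR n)))).
  { intros n. symmetry. apply dM_eq, xn_pos; auto. }
  apply lim_g; auto.
  - apply cont_of_ex_derive. unfold gdM. auto_derive. side.
  - unfold gdM. rewrite !Rmult_0_r, !Rplus_0_r, ln_1. unfold Rdiv. ring.
Qed.

Lemma M_lim x : 0 < x -> Un_cv (fun n => M (x + INR n)) 0.
Proof.
  intros Hx. apply (cv_ext (fun n => 1 * (Psi (x + INR n) - ln (x + INR n)) + 1 * gM (/ (x + INR n)))).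
  { intros n. rewrite M_eq by (apply xn_pos; auto). ring. }
  replace 0 with (1 * 0 + 1 * 0) by ring. apply cv_lin.
  - apply (cv_squeeze _ (fun n => / (x + INR n))).
    + intros n. destruct (Psi_bounds (x + INR n)) as [A B]. apply xn_pos; auto.
      rewrite Rabs_left1 by lra. lra.
    + apply inv_cv; auto.
  - apply lim_g; auto.
    + apply cont_of_ex_derive. unfold gM. auto_derive. side.
    + unfold gM. rewrite !Rmult_0_r, !Rplus_0_r, ln_1. unfold Rdiv. ring.
Qed.

Lemma lin_der (f g f' g' : R -> R) a b y :
  derivable_pt_lim f y (f' y) -> derivable_pt_lim g y (g' y) ->
  derivable_pt_lim (fun z => a * f z + b * g z) y (a * f' y + b * g' y).
Proof.
  intros Hf Hg. apply is_derive_Reals in Hf. apply is_derive_Reals in Hg. apply is_derive_Reals.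
  apply (is_derive_plus (fun z => a * f z) (fun z => b * g z)).
  - apply (is_derive_scal f y a (f' y)); auto.
  - apply (is_derive_scal g y b (g' y)); auto.
Qed.

Lemma neg_gen (h h' : R -> R) Y : 0 < Y ->
  (forall y, 0 < y -> derivable_pt_lim h y (h' y)) ->
  (forall y, Y <= y -> 0 < h' y) ->
  (forall x, 0 < x -> Un_cv (fun n => h (x + INR n)) 0) ->
  forall y, Y <= y -> h y < 0.
Proof.
  intros HY Hd Hp Hl y Hy. apply neg_of_steps.
  - apply (incr_of_deriv h h'). intros; apply Hd; lra. intros; apply Hp; lra.
  - apply Hl; lra.
Qed.

Lemma K_neg y : 0 < y -> K y < 0.
Proof.
  intros Hy. apply neg_of_steps.
  - intros z Hz. generalize (K_step z).
    assert (dK z < 0).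
    { apply (neg_gen dK dKd z); try lra. apply dK_der. intros; apply dKd_pos; lra. apply dK_lim. }
    lra.
  - apply K_lim; auto.
Qed.

Lemma M_neg y : 0 < y -> M y < 0.
Proof.
  intros Hy. apply neg_of_steps.
  - intros z Hz. generalize (M_step z). intros E.
    assert (dM z < 0).
    { apply (neg_gen dM dMd z); try lra. apply dM_der. intros; apply dMd_pos; lra. apply dM_lim. }
    specialize (E ltac:(lra)). lra.
  - apply M_lim; auto.
Qed.

Lemma comb_lim a b x : 0 < x -> Un_cv (fun n => a * M (x + INR n) + b * K (x + INR n)) 0.
Proof.
  intros Hx. replace 0 with (a * 0 + b * 0) by ring. apply cv_lin. apply M_lim; auto. apply K_lim; auto.
Qed.

Lemma dcomb_lim a b x : 0 < x -> Un_cv (fun n => a * dM (x + INR n) + b * dK (x + INR n)) 0.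
Proof.
  intros Hx. replace 0 with (a * 0 + b * 0) by ring. apply cv_lin. apply dM_lim; auto. apply dK_lim; auto.
Qed.

Lemma G_pos y : 0 < y -> 4 * K y < M y.
Proof.
  intros Hy.
  assert (H : (fun z => -1 * M z + 4 * K z) y < 0).
  { apply (neg_of_steps (fun z => -1 * M z + 4 * K z) y).
    - intros z Hz. simpl. generalize (M_step z), (K_step z). intros E1 E2.
      assert (-1 * dM z + 4 * dK z < 0).
      { apply (neg_gen (fun z => -1 * dM z + 4 * dK z) (fun z => -1 * dMd z + 4 * dKd z) z); try lra.
        - intros w Hw. apply lin_der. apply dM_der; auto. apply dK_der; auto.
        - intros w Hw. generalize (dG_pos w ltac:(lra)). lra.
        - intros w Hw. apply dcomb_lim; auto. }
      specialize (E1 ltac:(lra)). lra.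
    - apply comb_lim; auto. }
  simpl in H. lra.
Qed.

Lemma F4 xi : xi < 4 -> exists x, 0 < x /\ M x < xi * K x.
Proof.
  intros Hxi. set (d := 4 - xi). assert (Hd : 0 < d) by (unfold d; lra).
  set (Y := 12 / d + 1). assert (HY : 12 / d < Y) by (unfold Y; lra).
  assert (HY0 : 0 < Y) by (unfold Y; assert (0 < 12 / d) by (apply Rdiv_lt_0_compat; lra); lra).
  exists Y. split; auto.
  assert (H : (fun z => 1 * M z + (- xi) * K z) Y < 0).
  { apply (neg_of_steps (fun z => 1 * M z + (- xi) * K z) Y).
    - intros z Hz. simpl. generalize (M_step z), (K_step z). intros E1 E2.
      assert (1 * dM z + (- xi) * dK z < 0).
      { apply (neg_gen (fun z => 1 * dM z + (- xi) * dK z) (fun z => 1 * dMd z + (- xi) * dKd z) z); try lra.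
        - intros w Hw. apply lin_der. apply dM_der; auto. apply dK_der; auto.
        - intros w Hw. assert (Hw0 : 0 < w) by lra.
          generalize (dG_bound w Hw0) (dKd_pos w Hw0). intros B P.
          assert (Hdw : 12 < d * w).
          { apply (Rmult_lt_reg_l (/ d)). apply Rinv_0_lt_compat; lra.
            replace (/ d * (d * w)) with w by (field; lra). unfold Rdiv in HY. lra. }
          assert (Hq : 0 < w * (1 * dMd w + - xi * dKd w)).
          { replace xi with (4 - d) by (unfold d; ring). nra. }
          apply (Rmult_lt_reg_l w). lra. lra.
        - intros w Hw. apply dcomb_lim; auto. }
      specialize (E1 ltac:(lra)).
      assert (xi * K z - xi * K (z+1) = xi * dK z) by (rewrite <- E2; ring). lra.
    - apply comb_lim; auto. }
  simpl in H. lra.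
Qed.

Lemma ln_nonneg a : 1 <= a -> 0 <= ln a.
Proof. intros. rewrite <- ln_1. apply ln_le'; lra. Qed.

Lemma div_bound N D a b : 0 <= N -> N <= a -> 0 < b -> b <= D -> N / D <= a / b.
Proof.
  intros H1 H2 H3 H4. unfold Rdiv. apply Rle_trans with (N * / b).
  - apply Rmult_le_compat_l; auto. apply Rinv_le_contravar; auto.
  - apply Rmult_le_compat_r; auto. left; apply Rinv_0_lt_compat; auto.
Qed.

Lemma M_lower x : 0 < x -> x <= 1 -> -68 < M x.
Proof.
  intros Hx Hx1.
  assert (E := M_step x Hx). assert (G := G_pos (x + 1) ltac:(lra)).
  assert (X2 : 0 < x ^ 2 <= 1) by (split; [ppos | nra]).
  assert (X3 : 0 < x ^ 3 <= 1) by (split; [ppos | nra]).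
  assert (HdM : -60 <= dM x).
  { unfold dM.
    assert (C1 : - / x - RM x = - ((34 * x ^ 3 + 117 * x ^ 2 + 127 * x + 45) / (6 * (x + 1) ^ 3 * (x + 2)))).
    { unfold RM. field. side. }
    assert (C2 : (34 * x ^ 3 + 117 * x ^ 2 + 127 * x + 45) / (6 * (x + 1) ^ 3 * (x + 2)) <= 323 / 12).
    { apply div_bound; try lra.
      assert (1 <= (x + 1) ^ 3) by (apply pow_R1_Rle; lra). nra. }
    assert (C3 : 0 <= RM (x + 1)).
    { unfold RM. left. apply Rdiv_lt_0_compat; [|ppos].
      assert (1 <= (x + 1) ^ 2) by (apply pow_R1_Rle; lra).
      assert (1 <= (x + 1) ^ 3) by (apply pow_R1_Rle; lra).
      assert (1 <= (x + 1) ^ 4) by (apply pow_R1_Rle; lra). lra. }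
    assert (L1 : ln (x + 1) <= x) by (generalize (ln_le_sub1 (x+1) ltac:(lra)); lra).
    assert (L2 : 0 <= ln (x + 2)) by (apply ln_nonneg; lra).
    assert (L3 : ln (x + 3) <= x + 2) by (generalize (ln_le_sub1 (x+3) ltac:(lra)); lra).
    lra. }
  assert (HK : -7/4 <= K (x + 1)).
  { unfold K.
    assert (L1 : 0 <= ln (x + 1)) by (apply ln_nonneg; lra).
    assert (L2 : ln (1 + (x + 1)) <= 2) by (generalize (ln_le_sub1 (1 + (x+1)) ltac:(lra)); lra).
    assert (L3 : 0 <= ln (2 + (x + 1))) by (apply ln_nonneg; lra).
    assert (R : (18 + 33 * (x + 1) + 14 * (x + 1) ^ 2) / (48 * (1 + (x + 1)) ^ 2 * (2 + (x + 1))) <= 140 / 576).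
    { assert (0 < (x+1)^2) by ppos. assert ((x+1)^2 <= 4) by nra.
      assert (4 <= (1 + (x + 1)) ^ 2) by nra.
      apply div_bound; [lra | lra | lra | nra]. }
    lra. }
  lra.
Qed.

Lemma K_upper x : 0 < x -> x <= 1 -> K x <= ln x / 24 + 1.
Proof.
  intros Hx Hx1. unfold K.
  assert (L1 : 0 <= ln (1 + x)) by (apply ln_nonneg; lra).
  assert (L2 : ln (2 + x) <= 2) by (generalize (ln_le_sub1 (2 + x) ltac:(lra)); lra).
  assert (0 < (18 + 33 * x + 14 * x ^ 2) / (48 * (1 + x) ^ 2 * (2 + x))).
  { assert (0 < x ^ 2) by ppos. apply Rdiv_lt_0_compat; [lra | ppos]. }
  lra.
Qed.

Lemma F5 eta : 0 < eta -> exists x, 0 < x /\ eta * K x < M x.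
Proof.
  intros He. set (x := exp (24 * (- 68 / eta - 1))).
  assert (Hx : 0 < x) by apply exp_pos.
  assert (Hneg : 24 * (- 68 / eta - 1) < 0).
  { assert (0 < 68 / eta) by (apply Rdiv_lt_0_compat; lra).
    assert (- 68 / eta = - (68 / eta)) by (unfold Rdiv; ring). lra. }
  assert (Hx1 : x <= 1).
  { unfold x. left. apply Rlt_le_trans with (exp 0). apply exp_increasing. lra. rewrite exp_0. lra. }
  exists x. split; auto.
  assert (HK := K_upper x Hx Hx1). assert (HM := M_lower x Hx Hx1).
  assert (Hl : ln x = 24 * (- 68 / eta - 1)) by (unfold x; apply ln_exp).
  assert (eta * K x <= eta * (ln x / 24 + 1)) by (apply Rmult_le_compat_l; lra).
  assert (eta * (ln x / 24 + 1) = -68) by (rewrite Hl; field; lra).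
  lra.
Qed.

Theorem mainTheorem8 (xi eta : R) :
  (forall x : R, 0 < x -> xi * K x < M x /\ M x < eta * K x) <->
  (4 <= xi /\ eta <= 0).
Proof.
  split.
  - intros H. split.
    + destruct (Rlt_or_le xi 4) as [Hlt|Hge]; auto.
      destruct (F4 xi Hlt) as [x [Hx Hm]]. destruct (H x Hx). lra.
    + destruct (Rle_or_lt eta 0) as [Hle|Hgt]; auto.
      destruct (F5 eta Hgt) as [x [Hx Hm]]. destruct (H x Hx). lra.
  - intros [H1 H2] x Hx. assert (HK := K_neg x Hx). assert (HM := M_neg x Hx).
    assert (HG := G_pos x Hx). split.
    + assert (xi * K x <= 4 * K x) by nra. lra.
    + assert (0 <= eta * K x) by nra. lra.
Qed.
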